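(* Let $G=(V,E)$ be an undirected graph (finite or infinite) and let $X,Y$ be two ``strong'' partitive sets of $G$ with $X\cap Y=\emptyset$. Then there is at most one color class $\widehat A$ of $G$ containing an edge $(x,y)$ with $x\in X$ and $y\in Y$.
   Context: A graph $G=(V,E)$ has vertex set $V$ and edge set $E\subseteq V^2$; it is undirected if $E$ is irreflexive and symmetric. A set $X\subseteq V$ is a partitive set of $G$ if for all $a,b\in X$ and $c\in V\setminus X$: $(a,c)\in E\Leftrightarrow(b,c)\in E$ and $(c,a)\in E\Leftrightarrow(c,b)\in E$; $I(G)$ is the class of partitive sets. A ``strong'' partitive set is an $X\in I(G)$ such that for every $Y\in I(G)$ with $X\cap Y\neq\emptyset$, $X\subseteq Y$ or $Y\subseteq X$. Implication classes: on $E$ define $(a,b)\Gamma(a',b')$ iff either $a=a'$ and $(b,b')\notin E$, or $b=b'$ and $(a,a')\notin E$; the classes of the transitive closure $\Gamma^*$ are the implication classes. For an implication class $A$, $A^{-1}=\{(b,a):(a,b)\in A\}$ and the color class is $\widehat A=A\cup A^{-1}$. *)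

(* Defs.v *)
From Stdlib Require Import Relations.Relation_Operators.

Section Graphs.
Variable V : Type.
Variable E : V -> V -> Prop.

Definition undirected : Prop :=
  (forall a, ~ E a a) /\ (forall a b, E a b -> E b a).

Definition partitive (X : V -> Prop) : Prop :=
  forall a b c, X a -> X b -> ~ X c ->
    (E a c <-> E b c) /\ (E c a <-> E c b).

Definition strong_partitive (X : V -> Prop) : Prop :=
  partitive X /\
  forall Y : V -> Prop, partitive Y -> (exists v, X v /\ Y v) ->
    (forall v, X v -> Y v) \/ (forall v, Y v -> X v).

Definition edge (p : V * V) : Prop := E (fst p) (snd p).

Definition Gamma (p q : V * V) : Prop :=
  edge p /\ edge q /\
  ((fst p = fst q /\ ~ E (snd p) (snd q)) \/
   (snd p = snd q /\ ~ E (fst p) (fst q))).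

(* A is an implication class: an equivalence class of the transitive closure
   Gamma* on E (Gamma is reflexive on E for undirected G, so the class of
   an edge e is everything Gamma-reachable from e, including e). *)
Definition implication_class (A : V * V -> Prop) : Prop :=
  exists e, edge e /\
    forall f, A f <-> (e = f \/ clos_trans _ Gamma e f).

Definition inv_class (A : V * V -> Prop) : V * V -> Prop :=
  fun p => A (snd p, fst p).

Definition color_class (A : V * V -> Prop) : V * V -> Prop :=
  fun p => A p \/ inv_class A p.

End Graphs.

Arguments undirected {V} E.
Arguments partitive {V} E X.
Arguments strong_partitive {V} E X.
Arguments edge {V} E p.
Arguments Gamma {V} E p q.
Arguments implication_class {V} E A.
Arguments inv_class {V} A p.
Arguments color_class {V} A p.

(* Main.v *)
Require Import Defs.
From Stdlib Require Import Relations.Relation_Operators Classical.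

Section Aux.
Variable V : Type.
Variable E : V -> V -> Prop.
Hypothesis Esym : forall a b, E a b -> E b a.

Definition swp (p : V * V) : V * V := (snd p, fst p).
Definition RR p q := p = q \/ clos_trans _ (Gamma E) p q.

Lemma Gamma_sym p q : Gamma E p q -> Gamma E q p.
Proof.
  unfold Gamma. intros [H1 [H2 [[H3 H4]|[H3 H4]]]]; split; auto; split; auto;
  try (left; split; auto; intro H; apply H4; auto; fail);
  try (right; split; auto; intro H; apply H4; auto; fail).
Qed.

Lemma Gamma_swp p q : Gamma E p q -> Gamma E (swp p) (swp q).
Proof.
  destruct p as [a b], q as [c d]. unfold Gamma, edge, swp; simpl.
  intros [H1 [H2 [[H3 H4]|[H3 H4]]]]; repeat split; auto.
Qed.

Lemma RR_refl p : RR p p. Proof. left; auto. Qed.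
Lemma RR_trans p q r : RR p q -> RR q r -> RR p r.
Proof.
  unfold RR. intros [->|H] [->|H']; auto. right. eapply t_trans; eauto.
Qed.
Lemma RR_sym p q : RR p q -> RR q p.
Proof.
  unfold RR. intros [->|H]; auto. right.
  induction H. apply t_step, Gamma_sym; auto. eapply t_trans; eauto.
Qed.
Lemma RR_swp p q : RR p q -> RR (swp p) (swp q).
Proof.
  unfold RR. intros [->|H]; auto. right.
  induction H. apply t_step, Gamma_swp; auto. eapply t_trans; eauto.
Qed.
Lemma RR_G p q : Gamma E p q -> RR p q.
Proof. intro; right; apply t_step; auto. Qed.

Lemma G1 a b c : E a b -> E a c -> ~ E b c -> RR (a,b) (a,c).
Proof. intros. apply RR_G. unfold Gamma, edge; simpl; auto. Qed.
Lemma G2 a b c : E a c -> E b c -> ~ E a b -> RR (a,c) (b,c).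
Proof. intros. apply RR_G. unfold Gamma, edge; simpl; auto. Qed.

Definition Rc p q := RR p q \/ RR p (swp q).
Lemma swp_swp p : swp (swp p) = p. Proof. destruct p; reflexivity. Qed.
Lemma Rc_trans p q r : Rc p q -> Rc q r -> Rc p r.
Proof.
  unfold Rc. intros [H|H] [H'|H'].
  - left; eapply RR_trans; eauto.
  - right; eapply RR_trans; eauto.
  - right. apply RR_trans with (swp q); auto. apply RR_swp; auto.
  - left. apply RR_trans with (swp q); auto. rewrite <- (swp_swp r). apply RR_swp; auto.
Qed.
Lemma Rc_sym p q : Rc p q -> Rc q p.
Proof.
  unfold Rc. intros [H|H]. left; apply RR_sym; auto.
  right. apply RR_swp in H. rewrite swp_swp in H.
  apply RR_sym; auto.
Qed.

Lemma color_Rc A : implication_class E A ->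
  exists e, forall p, color_class A p <-> Rc e p.
Proof.
  intros [e [He HA]]. exists e. intro q. unfold color_class, inv_class, Rc, RR.
  rewrite !HA. destruct q; simpl. tauto.
Qed.

Section LemA.
Variable Y : V -> Prop.
Hypothesis HY : strong_partitive E Y.
Variable x y0 : V.
Hypothesis nYx : ~ Y x.
Hypothesis Yy0 : Y y0.
Hypothesis Exy0 : E x y0.

Definition Nb u := ~ Y u /\ forall y, Y y -> E u y.
Definition nrel a b := Nb a /\ Nb b /\ ~ E a b.
Definition Nc u := clos_refl_trans _ nrel x u.
Definition Q u := Nb u /\ forall y', Y y' -> (RR (x,y0) (x,y') <-> RR (u,y0) (u,y')).

Lemma uniform c y y' : ~ Y c -> Y y -> Y y' -> E c y -> E c y'.
Proof. intros. destruct HY as [HP _]. apply (proj2 (HP y y' c H0 H1 H)); auto. Qed.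

Lemma Nb_x : Nb x.
Proof. split; auto. intros y Hy. apply (uniform x y0 y); auto. Qed.

Lemma step_one u w y' : Nb u -> Nb w -> ~ E u w -> Y y' ->
  RR (u,y0) (u,y') -> RR (w,y0) (w,y').
Proof.
  intros [_ Hu] [_ Hw] nuw Yy' H.
  apply RR_trans with (u,y0). { apply G2; auto. }
  apply RR_trans with (u,y'); auto. apply G2; auto.
Qed.

Lemma Q_prop a b : clos_refl_trans _ nrel a b -> Q a -> Q b.
Proof.
  induction 1; auto.
  intros [Na Ha]. destruct H as [Nx [Ny nxy]]. split; auto.
  intros y' Yy'. rewrite Ha; auto. split.
  - apply step_one; auto.
  - apply step_one; auto.
Qed.

Lemma Nc_Q u : Nc u -> Q u.
Proof.
  intro H. apply (Q_prop x u H). split. apply Nb_x. tauto.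
Qed.

Lemma not_Nb_nonadj c y : ~ Y c -> ~ Nb c -> Y y -> ~ E c y.
Proof.
  intros nY nN Yy Ecy. apply nN. split; auto. intros z Hz. apply (uniform c y z); auto.
Qed.

Lemma lemA : forall t, Y t -> RR (x,y0) (x,t).
Proof.
  intros t Yt. apply NNPP. intro nR.
  destruct (classic (exists c n, ~ Y c /\ ~ Nb c /\ Nc n /\ E c n))
    as [[c [n [nYc [nNc [Ncn Ecn]]]]]|Hno].
  - destruct (Nc_Q n Ncn) as [[nYn Nn] Hn]. apply nR. rewrite Hn; auto.
    rewrite <- (swp_swp (n,y0)), <- (swp_swp (n,t)). apply RR_swp. simpl.
    apply RR_trans with (c,n).
    + apply G2; auto. intro h. apply (not_Nb_nonadj c y0); auto.
    + apply RR_sym. apply G2; auto. intro h. apply (not_Nb_nonadj c t); auto.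
  - set (Z := fun v => (Y v /\ RR (x,y0) (x,v)) \/ Nc v).
    assert (KEY : forall a c, Z a -> ~ Z c -> (E a c <-> (Y c \/ Nb c))).
    { intros a c Za nZc.
      destruct (classic (Y c)) as [Yc|nYc].
      - split; auto. intros _. destruct Za as [[Ya Ra]|Nca].
        + apply NNPP; intro nE. apply nZc. left. split; auto.
          apply RR_trans with (x,a); auto. apply G1; try (apply (uniform x y0); auto; fail); auto.
        + apply (proj2 (proj1 (Nc_Q a Nca))); auto.
      - destruct (classic (Nb c)) as [Nbc|nNbc].
        + split; auto. intros _. destruct Za as [[Ya Ra]|Nca].
          * apply Esym, (proj2 Nbc); auto.
          * apply NNPP; intro nE. apply nZc. right.
            eapply rt_trans. apply Nca. apply rt_step.
            split. apply (proj1 (Nc_Q a Nca)). split; auto.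
        + split; [|tauto]. intro Eac. exfalso. destruct Za as [[Ya Ra]|Nca].
          * eapply not_Nb_nonadj; eauto.
          * apply Hno. exists c, a. repeat split; auto. }
    destruct HY as [HP HS].
    destruct (HS Z) as [H|H].
    + intros a b c Za Zb nZc. split.
      * rewrite (KEY a c Za nZc), (KEY b c Zb nZc). tauto.
      * split; intro H.
        -- apply Esym. apply (KEY b c Zb nZc). apply (KEY a c Za nZc). auto.
        -- apply Esym. apply (KEY a c Za nZc). apply (KEY b c Zb nZc). auto.
    + exists y0. split; auto. left. split; auto. apply RR_refl.
    + destruct (H t Yt) as [[_ Hr]|Nct]; auto.
      apply (proj1 (proj1 (Nc_Q t Nct))); auto.
    + apply nYx. apply H. right. apply rt_refl.
Qed.
End LemA.
End Aux.

Theorem theorem3p4 (V : Type) (E : V -> V -> Prop) (X Y : V -> Prop) :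
  undirected E ->
  strong_partitive E X -> strong_partitive E Y ->
  (forall v, ~ (X v /\ Y v)) ->
  forall A1 A2 : V * V -> Prop,
    implication_class E A1 -> implication_class E A2 ->
    (exists x y, X x /\ Y y /\ E x y /\ color_class A1 (x, y)) ->
    (exists x y, X x /\ Y y /\ E x y /\ color_class A2 (x, y)) ->
    forall p, color_class A1 p <-> color_class A2 p.
Proof.
  intros [Eirr Esym] HX HY Hd A1 A2 HA1 HA2 [x1 [y1 [X1 [Y1 [E1 C1]]]]]
    [x2 [y2 [X2 [Y2 [E2 C2]]]]] p.
  destruct (color_Rc V E A1 HA1) as [e1 He1].
  destruct (color_Rc V E A2 HA2) as [e2 He2].
  assert (R1 : RR V E (x1,y1) (x1,y2)).
  { apply (lemA V E Esym Y HY x1 y1); auto. intro; apply (Hd x1); auto. }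
  assert (R2 : RR V E (y2,x1) (y2,x2)).
  { apply (lemA V E Esym X HX y2 x1); auto. intro; apply (Hd y2); auto.
    apply Esym. destruct HY as [HP _].
    apply (proj2 (HP y1 y2 x1 Y1 Y2 (fun h => Hd x1 (conj X1 h)))); auto. }
  apply (RR_swp V E Esym) in R2. simpl in R2.
  assert (Rg : Rc V E (x1,y1) (x2,y2)).
  { left. eapply RR_trans; eauto. }
  assert (R12 : Rc V E e1 e2).
  { apply He1 in C1. apply He2 in C2.
    eapply (Rc_trans V E Esym); eauto.
    eapply (Rc_trans V E Esym); eauto. apply Rc_sym; auto. }
  rewrite He1, He2. split; intro H.
  - eapply (Rc_trans V E Esym); eauto. apply Rc_sym; auto.
  - eapply (Rc_trans V E Esym); eauto.
Qed.
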